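(* Given a finite hypergraph $H=(X,E)$, one can construct a set of points $P=\{p_e : e\in E\}$ in the plane (in convex position) and a family of convex polygons $\mathcal{R}=\{R_v: v\in X\}$ (possibly degenerate, each the convex hull of a subset of $P$) such that for every $e\in E$ and $v\in X$, $p_e\in R_v$ if and only if $v\in e$. Consequently, for every set $X'\subseteq X$ of $k$ vertices, the number of hyperedges $e\subseteq X'$ equals the number of points of $P$ exposed after deleting $\{R_v:v\in X'\}$ from $\mathcal{R}$, so a densest $k$-subhypergraph of $H$ corresponds to an optimal solution of max-exposure on $(P,\mathcal{R},k)$.
   Context: A point $p\in P$ is exposed with respect to a family of ranges $\mathcal{R}'$ if it lies in no range of $\mathcal{R}'$. Max-exposure: given $P$, $\mathcal{R}$ and $k$, delete $k$ ranges from $\mathcal{R}$ so as to maximize the number of exposed points. Densest $k$-subhypergraph: given a hypergraph $H=(X,E)$, find $k$ vertices maximizing the number of hyperedges entirely contained in them. *)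

(* Defs.v *)
From HB Require Import structures.
From mathcomp Require Import all_boot all_order all_algebra.
From mathcomp Require Import boolp reals.
Set Implicit Arguments. Unset Strict Implicit. Unset Printing Implicit Defensive.
Import Order.TTheory GRing.Theory Num.Theory.
Local Open Scope ring_scope.

Notation pt R := 'rV[R]_2.

Definition in_hull (R : realType) (T : finType) (A : {set T}) (q : T -> pt R)
    (x : pt R) : Prop :=
  exists w : T -> R,
    [/\ forall t, 0 <= w t,
        forall t, t \notin A -> w t = 0,
        \sum_(t in A) w t = 1
      & x = \sum_(t in A) w t *: q t].

Definition convex_position (R : realType) (T : finType) (E : {set T})
    (q : T -> pt R) : Prop :=
  forall e, e \in E -> ~ in_hull (E :\ e) q (q e).

Definition induced_edges (X : finType) (E : {set {set X}}) (X' : {set X}) : nat :=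
  #|[set e in E | e \subset X']|.

(* Max-exposure instance: points P = {q e : e in E}, ranges R_v = conv{q e : e in S v}. *)
Definition exposed_count (R : realType) (X : finType) (E : {set {set X}})
    (q : {set X} -> pt R) (S : X -> {set {set X}}) (X' : {set X}) : nat :=
  #|[set e in E | `[< forall v, v \notin X' -> ~ in_hull (S v) q (q e) >]]|.

(* Main.v *)
Require Import Defs.
From HB Require Import structures.
From mathcomp Require Import all_boot all_order all_algebra.
From mathcomp Require Import boolp reals.
From mathcomp Require Import ring.
Set Implicit Arguments. Unset Strict Implicit. Unset Printing Implicit Defensive.
Import Order.TTheory GRing.Theory Num.Theory.
Local Open Scope ring_scope.

Section Parab.
Variables (R : realType) (T : finType).

Definition sv (e : T) : R := (enum_rank e : nat)%:R.
Definition qp (e : T) : 'rV[R]_2 := \row_(i < 2) (sv e) ^+ i.+1.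

Lemma sv_inj : injective sv.
Proof.
move=> a b /eqP; rewrite /sv eqr_nat => /eqP H.
by apply: enum_rank_inj; apply: val_inj.
Qed.

Lemma qp_inj : injective qp.
Proof.
move=> a b /(congr1 (fun M : 'rV[R]_2 => M 0 0)); rewrite !mxE !expr1.
exact: sv_inj.
Qed.

Lemma hull_qp (A : {set T}) e : in_hull A qp (qp e) <-> e \in A.
Proof.
split; last first.
  move=> eA; exists (fun t => (t == e)%:R); split.
  - by move=> t; case: (t == e).
  - move=> t tA; case: eqP => // te; by rewrite te eA in tA.
  - rewrite (bigD1 e) //= eqxx big1 ?addr0 // => t /andP[_ /negbTE ->] //.
  - rewrite (bigD1 e) //= eqxx scale1r big1 ?addr0 // => t /andP[_ /negbTE ->].
    by rewrite scale0r.
case=> w [w0 wA w1 eq]; apply/negPn/negP => eA.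
have c (j : 'I_2) : sv e ^+ j.+1 = \sum_(t in A) w t * sv t ^+ j.+1.
  have := congr1 (fun M : 'rV[R]_2 => M 0 j) eq; rewrite /= summxE mxE => ->.
  by apply: eq_bigr => t _; rewrite !mxE.
have c0 : sv e = \sum_(t in A) w t * sv t.
  by have := c ord0; rewrite /= expr1; under eq_bigr do rewrite expr1.
have c1 := c (lift ord0 ord0); simpl in c1.
have key : \sum_(t in A) w t * (sv t - sv e) ^+ 2 = 0.
  have -> : \sum_(t in A) w t * (sv t - sv e) ^+ 2 =
     \sum_(t in A) w t * (sv t ^+ 2) - 2%:R * sv e * \sum_(t in A) w t * sv t
     + sv e ^+ 2 * \sum_(t in A) w t.
    rewrite !mulr_sumr -sumrN -!big_split /=; apply: eq_bigr => t _.
    rewrite sqrrB; ring.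
  by rewrite -c1 -c0 w1; ring.
have H0 : forall t, t \in A -> w t * (sv t - sv e) ^+ 2 = 0.
  move/eqP: key; rewrite psumr_eq0 => [/allP H t tA|t _].
    by move: (H t (mem_index_enum t)); rewrite tA /= => /eqP.
  by rewrite mulr_ge0 // sqr_ge0.
suff : \sum_(t in A) w t = 0 by rewrite w1 => /eqP; rewrite oner_eq0.
apply: big1 => t tA.
move: (H0 t tA) => /eqP; rewrite mulf_eq0 => /orP[/eqP //|].
rewrite sqrf_eq0 subr_eq0 => /eqP /sv_inj te.
by rewrite -te tA in eA.
Qed.

End Parab.

Theorem mainTheorem5 (R : realType) (X : finType) (E : {set {set X}}) :
  exists (q : {set X} -> 'rV[R]_2) (S : X -> {set {set X}}),
   (
    [/\ {in E &, injective q},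
        convex_position E q,
        (forall v, S v \subset E),
        (forall e v, e \in E -> (in_hull (S v) q (q e) <-> v \in e))
      & (forall X' : {set X}, induced_edges E X' = exposed_count E q S X')] /\
      (forall (k : nat) (X' : {set X}), #|X'| = k ->
          ((forall Y : {set X}, #|Y| = k -> (induced_edges E Y <= induced_edges E X')%N)
           <->
           (forall Y : {set X}, #|Y| = k -> (exposed_count E q S Y <= exposed_count E q S X')%N)))).
Proof.
pose q := @qp R {set X}.
pose S := fun v : X => [set e in E | v \in e].
have hS : forall e v, e \in E -> (in_hull (S v) q (q e) <-> v \in e).
  move=> e v eE; rewrite hull_qp inE eE /=; done.
have hX : forall X' : {set X}, induced_edges E X' = exposed_count E q S X'.
  move=> X'; rewrite /induced_edges /exposed_count; apply: eq_card => e.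
  rewrite !inE; case eE: (e \in E) => //=.
  apply/idP/idP.
    move=> sub; apply/asboolP => v vX /(hS e v eE) ve.
    by move/subsetP: sub => /(_ v ve); rewrite (negbTE vX).
  move/asboolP => H; apply/subsetP => v ve; apply/negPn/negP => vX.
  by apply: (H v vX); apply/(hS e v eE).
exists q, S; split.
  split => //.
  - by move=> a b _ _; apply: qp_inj.
  - by move=> e eE; rewrite hull_qp !inE eqxx.
  - by move=> v; apply/subsetP => e; rewrite inE => /andP[].
move=> k X' _; split=> H Y HY; have := H Y HY; by rewrite !hX.
Qed.
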